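(* Let $n\ge 6$ and let $\mathcal{F}$ be a finite set of graphs. Let $c:\mathcal{G}_n\to\{0,1\}$ be a concept such that, for all $T\ge0$, the graphs of $\mathcal{G}_n$ are not linearly separable under $\overline{\phi^{(T)}_{\mathsf{WL}}}$ with respect to $c$. Assume that every $G\in\mathcal{G}_n$ with $c(G)=0$ has at least one vertex contained in a subgraph of $G$ isomorphic to a graph in $\mathcal{F}$, while no graph $G$ with $c(G)=1$ has such a vertex. Then, for every $T\ge 0$, the graphs of $\mathcal{G}_n$ are linearly separable under $\overline{\phi^{(T)}_{\mathsf{WL},\mathcal{F}}}$ with respect to $c$.
   Context: $\mathcal{G}_n$ is the set of (unlabeled, simple, undirected) graphs on $n$ vertices; ''subgraph'' means induced subgraph $G[X]$, $X\subseteq V(G)$. $1$-WL: $C^1_0$ constant, $C^1_t(v)=\mathsf{RELABEL}(C^1_{t-1}(v),\{\!\{C^1_{t-1}(u):u\in N(v)\}\!\})$ with a fixed injective $\mathsf{RELABEL}$ shared by all graphs. $1$-WL$_{\mathcal{F}}$: same update with initial colour $(\ell_F(v))_{F\in\mathcal{F}}$, $\ell_F(v)=1$ if $v$ lies in some $X$ with $G[X]$ isomorphic to $F$, else $0$. $\phi_t(G)$ (resp. $\phi_{\mathcal{F},t}(G)$) counts the vertices of $G$ of each colour occurring at round $t$ over $\mathcal{G}_n$; $\phi^{(T)}_{\mathsf{WL}}$, $\phi^{(T)}_{\mathsf{WL},\mathcal{F}}$ are the concatenations over rounds $0,\dots,T$, and the bar denotes normalisation to unit Euclidean norm. Linearly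 separable with respect to $c$: there exist $\mathbf{w},b$ with $\mathbf{w}^\top\mathbf{x}_G+b>0$ when $c(G)=1$ and $<0$ when $c(G)=0$, $\mathbf{x}_G$ the feature vector of $G$. *)

(* Defs.v *)
From HB Require Import structures.
From mathcomp Require Import all_boot all_order all_algebra.
From mathcomp Require Import reals.
Set Implicit Arguments. Unset Strict Implicit. Unset Printing Implicit Defensive.
Import Order.TTheory GRing.Theory Num.Theory.

(* Simple undirected graphs on the vertex set 'I_n: symmetric irreflexive
   sets of ordered pairs.  The (finite) type graph n plays the role of G_n. *)
Definition is_sgraph n (A : {set 'I_n * 'I_n}) : bool :=
  [forall u, forall v, ((u, v) \in A) == ((v, u) \in A)] &&
  [forall u, (u, u) \notin A].

Definition graph n := {A : {set 'I_n * 'I_n} | is_sgraph A}.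

Definition adj n (G : graph n) (u v : 'I_n) : bool := (u, v) \in val G.

(* Vertex v of G lies in some X with G[X] isomorphic to F (induced). *)
Definition in_copy m n (F : graph m) (G : graph n) (v : 'I_n) : bool :=
  [exists f : {ffun 'I_m -> 'I_n},
     [&& injectiveb f, v \in codom f &
         [forall i, forall j, adj F i j == adj G (f i) (f j)]]].

Definition pattern := {m : nat & graph m}.

Definition in_family n (Fs : seq pattern) (G : graph n) (v : 'I_n) : bool :=
  has (fun F : pattern => in_copy (projT2 F) G v) Fs.

(* Colours are finite trees; RELABEL is the injective tree constructor. *)
Definition colour := GenTree.tree nat.
Definition colle (a b : colour) : bool := (pickle a <= pickle b)%N.

(* Canonical representation of a multiset of colours: its sorted list. *)
Definition relabel (c : colour) (ms : seq colour) : colour :=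
  GenTree.Node 0 [:: c; GenTree.Node 0 (sort colle ms)].

Local Open Scope ring_scope.
Section WL.
Variable n : nat.
Variable init : graph n -> 'I_n -> colour.

Fixpoint wl_col (G : graph n) (t : nat) : 'I_n -> colour :=
  match t with
  | 0 => init G
  | t'.+1 => fun v => relabel (wl_col G t' v)
                        [seq wl_col G t' u | u <- enum 'I_n & adj G v u]
  end.

Definition wl_index (T : nat) : seq (nat * colour) :=
  undup (flatten [seq [seq (t, wl_col G t v) | G <- enum {: graph n},
                                                 v <- enum 'I_n]
                  | t <- iota 0 T.+1]).

Definition wl_feat (R : realType) (T : nat) (G : graph n)
  : 'rV[R]_(size (wl_index T)) :=
  \row_i (#|[pred v | wl_col G (nth (0%N, GenTree.Leaf 0) (wl_index T) i).1 v
                      == (nth (0%N, GenTree.Leaf 0) (wl_index T) i).2]|)%:R.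

Definition normalize (R : realType) k (x : 'rV[R]_k) : 'rV[R]_k :=
  (Num.sqrt (\sum_i x 0 i ^+ 2))^-1 *: x.

Definition wl_nfeat (R : realType) (T : nat) (G : graph n) :=
  normalize (wl_feat R T G).
End WL.

Definition init_plain n (G : graph n) (v : 'I_n) : colour := GenTree.Leaf 0.

Definition init_F (Fs : seq pattern) n (G : graph n) (v : 'I_n) : colour :=
  GenTree.Node 1 [seq GenTree.Leaf (nat_of_bool (in_copy (projT2 F) G v)) | F <- Fs].

Definition lin_sep (R : realType) n k (X : graph n -> 'rV[R]_k)
  (c : graph n -> bool) : Prop :=
  exists (w : 'rV[R]_k) (b : R), forall G : graph n,
    (c G -> 0 < \sum_i w 0 i * X G 0 i + b) /\
    (~~ c G -> \sum_i w 0 i * X G 0 i + b < 0).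

(* Main.v *)
Require Import Defs.
From HB Require Import structures.
From mathcomp Require Import all_boot all_order all_algebra.
From mathcomp Require Import reals.
Set Implicit Arguments. Unset Strict Implicit. Unset Printing Implicit Defensive.
Import Order.TTheory GRing.Theory Num.Theory.
Local Open Scope ring_scope.

Lemma mem_idx n (init : graph n -> 'I_n -> colour) T G v :
  (0%N, init G v) \in wl_index init T.
Proof.
rewrite /wl_index mem_undup; apply/flatten_mapP; exists 0%N.
  by rewrite mem_iota.
by apply: (@allpairs_f _ _ _ (fun G v => (0%N, wl_col init G 0 v))); rewrite mem_enum.
Qed.

Lemma normalize_sum (R : realType) k (w x : 'rV[R]_k) :
  \sum_i w 0 i * normalize x 0 i =
  (Num.sqrt (\sum_i x 0 i ^+ 2))^-1 * \sum_i w 0 i * x 0 i.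
Proof.
rewrite mulr_sumr; apply: eq_bigr => i _; rewrite /normalize mxE.
by rewrite mulrCA.
Qed.

Lemma norm_pos (R : realType) k (x : 'rV[R]_k) i : x 0 i != 0 ->
  0 < (Num.sqrt (\sum_i x 0 i ^+ 2))^-1.
Proof.
move=> xi; rewrite invr_gt0 sqrtr_gt0 (bigD1 i) //=.
apply: (@lt_le_trans _ _ (x 0 i ^+ 2)); first by rewrite exprn_even_gt0.
by rewrite lerDl sumr_ge0 // => j _; rewrite sqr_ge0.
Qed.

Lemma sum_pick (R : realType) k (j : 'I_k) (a : R) :
  \sum_(i < k) (if i == j then a else 0) = a.
Proof. by rewrite -big_mkcond big_pred1_eq. Qed.

Lemma sum_pick_nat (R : realType) k (m : nat) (a : R) : 0 <= a ->
  \sum_(i < k) (if val i == m then a else 0) <= a.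
Proof.
move=> a0; case: (ltnP m k) => [mk|km].
  rewrite (eq_bigr (fun i : 'I_k => if i == Ordinal mk then a else 0)).
    by rewrite sum_pick.
  by move=> i _.
rewrite big1 // => i _; case: eqP => // ei.
by move: (ltn_ord i); rewrite ei ltnNge km.
Qed.

Theorem proposition13 (R : realType) (n : nat) (Fs : seq pattern)
  (c : graph n -> bool) :
  (6 <= n)%N ->
  (forall T : nat, ~ lin_sep (@wl_nfeat n (@init_plain n) R T) c) ->
  (forall G : graph n, ~~ c G -> exists v : 'I_n, in_family Fs G v) ->
  (forall G : graph n, c G -> forall v : 'I_n, ~~ in_family Fs G v) ->
  forall T : nat, lin_sep (@wl_nfeat n (@init_F Fs n) R T) c.
Proof.
move=> n6 _ H0 H1 T.
set L0 : colour := GenTree.Node 1 [seq GenTree.Leaf 0 | F <- Fs].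
set idx := wl_index (@init_F Fs n) T.
set d : nat * colour := (0%N, GenTree.Leaf 0).
have Hu : uniq idx by apply: undup_uniq.
have HL0 : forall G v, (@init_F Fs n G v == L0) = ~~ in_family Fs G v.
  move=> G v; rewrite /init_F /L0 /in_family -all_predC.
  apply/eqP/allP => [[/eq_in_map E] F FF|E].
    by have := E F FF => /= [[]]; case: in_copy.
  by congr GenTree.Node; apply/eq_in_map => F FF /=; have := E F FF => /= /negbTE ->.
pose w := \row_(i < size idx) (if val i == index (0%N, L0) idx then 1 : R
            else if (nth d idx i).1 == 0%N then - (n.+1)%:R else 0).
exists w, 0 => G; rewrite addr0 /wl_nfeat normalize_sum.
set x := wl_feat (@init_F Fs n) R T G.
have xE : forall i, x 0 i = (#|[pred v | wl_col (@init_F Fs n) G (nth d idx i).1 v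
                      == (nth d idx i).2]|)%:R by move=> i; rewrite mxE.
have n0 : (0 < n)%N by apply: leq_trans n6.
set p0 := (0%N, L0).
split=> cG.
  have p0in : p0 \in idx.
    have := mem_idx (@init_F Fs n) T G (Ordinal n0).
    have e : @init_F Fs n G (Ordinal n0) = L0 by apply/eqP; rewrite HL0 H1.
    by rewrite e.
  have i0lt : (index p0 idx < size idx)%N by rewrite index_mem.
  pose i0 := Ordinal i0lt.
  have nth0 : nth d idx i0 = p0 by apply: nth_index.
  have x0 : x 0 i0 = n%:R.
    rewrite xE nth0 /=; congr (_%:R).
    rewrite -[RHS]card_ord; apply: eq_card => u /=.
    by rewrite inE HL0 H1.
  have Hnorm := norm_pos (x := x) (i := i0).
  apply: mulr_gt0; first by apply: Hnorm; rewrite x0 pnatr_eq0 -lt0n.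
  rewrite (bigD1 i0) //= big1 ?addr0 => [|i ne].
    by rewrite x0 mxE /= eqxx mul1r ltr0n.
  rewrite mxE.
  have -> : (val i == index p0 idx) = false.
    by apply/negbTE; apply: contra ne => /eqP e; apply/eqP/val_inj.
  case: ifP => h1; last by rewrite mul0r.
  rewrite xE (eqP h1); apply/eqP; rewrite mulf_eq0 pnatr_eq0; apply/orP; right.
  rewrite -leqn0 leqNgt; apply/negP => /card_gt0P [u]; rewrite !inE /= => /eqP hu.
  have hp : nth d idx i = p0.
    have e : @init_F Fs n G u = L0 by apply/eqP; rewrite HL0 H1.
    by move: hu (eqP h1); rewrite /p0 /= e; case: (nth d idx i) => a b /= -> ->.
  by move: ne; rewrite -(inj_eq val_inj) /= -hp index_uniq ?eqxx.
have [v vF] := H0 G cG.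
set col := @init_F Fs n G v.
have colL : col != L0 by rewrite HL0 vF.
have p1in : (0%N, col) \in idx by apply: mem_idx.
have i1lt : (index (0%N, col) idx < size idx)%N by rewrite index_mem.
pose i1 := Ordinal i1lt.
have nth1 : nth d idx i1 = (0%N, col) by apply: nth_index.
have i1ne : val i1 != index p0 idx.
  apply/eqP => e.
  have p0in : p0 \in idx by rewrite -index_mem -e.
  have := nth_index d p0in; rewrite -e nth1 => /(congr1 snd) /= ec.
  by move: colL; rewrite ec eqxx.

have x1 : 1 <= x 0 i1.
  rewrite xE nth1 ler1n; apply/card_gt0P; exists v.
  by rewrite inE /=.
have xn : forall i, x 0 i <= n%:R.
  by move=> i; rewrite xE ler_nat -[X in (_ <= X)%N]card_ord max_card.
have xge : forall i, 0 <= x 0 i by move=> i; rewrite xE ler0n.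
have bnd : forall i, w 0 i * x 0 i <=
   (if val i == index p0 idx then n%:R else 0) - (if i == i1 then (n.+1)%:R else 0).
  move=> i; rewrite mxE; case: (eqVneq i i1) => [->|ne].
    rewrite (negbTE i1ne) nth1 /= sub0r mulNr lerN2.
    by rewrite ler_peMr // ler0n.
  rewrite subr0; case: ifP => _; first by rewrite mul1r xn.
  case: ifP => _; last by rewrite mul0r.
  by rewrite mulNr oppr_le0 mulr_ge0 // ler0n.
have Hs : \sum_i w 0 i * x 0 i < 0.
  apply: (le_lt_trans (ler_sum _ (fun i _ => bnd i))).
  rewrite sumrB sum_pick subr_lt0.
  apply: (le_lt_trans (sum_pick_nat _ _ _)); first by rewrite ler0n.
  by rewrite ltr_nat.
have Hn : 0 < (Num.sqrt (\sum_i x 0 i ^+ 2))^-1.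
  by apply: (norm_pos (i := i1)); rewrite gt_eqF // (lt_le_trans ltr01 x1).
by rewrite pmulr_rlt0.
Qed.
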